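(* Let $G_1$ and $G_2$ be vertex-disjoint graphs. Then the join $G_1+G_2$ is $3$-$\gamma_{\rm tg}$-critical if and only if for each $i\in\{1,2\}$ one of the following holds: (a) $G_i$ is $3$-$\gamma_{\rm tg}$-critical; (b) $G_i \cong K_1 \cup K_k$ (disjoint union of an isolated vertex and a complete graph) for some $k\ge 2$.
   Context: The join $G_1+G_2$ is obtained from the disjoint union $G_1\cup G_2$ by adding all edges between $V(G_1)$ and $V(G_2)$. Total domination game on a graph without isolated vertices: Dominator and Staller alternately choose vertices, each chosen vertex must be adjacent to some vertex not yet totally dominated; the game ends when no legal move exists; Dominator minimizes, Staller maximizes the number of moves; $\gamma_{\rm tg}(G)$ is the number of moves in the Dominator-start game under optimal play. $G|v$ is $G$ with $v$ declared already totally dominated, with $\gamma_{\rm tg}(G|v)$ defined analogously. $G$ is $3$-$\gamma_{\rm tg}$-critical if $\gamma_{\rm tg}(G)=3$ and $\gamma_{\rm tg}(G|v)<3$ for every vertex $v$. *)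

(* Defs.v *)
From mathcomp Require Import all_boot.
Set Implicit Arguments. Unset Strict Implicit. Unset Printing Implicit Defensive.

(* A (finite simple) graph is a finType T with a symmetric irreflexive
   adjacency relation e : rel T. *)

Section TotalDominationGame.
Variables (T : finType) (e : rel T).

Definition nbhd (u : T) : {set T} := [set w | e u w].

(* S = set of vertices already totally dominated; u is a legal move iff
   u is adjacent to some vertex not yet totally dominated. *)
Definition legal (S : {set T}) (u : T) : bool := [exists w, e u w && (w \notin S)].

(* Value of the game from state S, with [dom] telling whether Dominator
   is to move (Dominator minimizes, Staller maximizes the number of
   remaining moves).  [n] is fuel; each move strictly enlarges S, so
   fuel #|T|.+1 suffices. *)
Fixpoint gval (n : nat) (S : {set T}) (dom : bool) : nat :=
  match n with
  | 0 => 0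
  | n'.+1 =>
    let moves := [seq u <- enum T | legal S u] in
    if moves is [::] then 0 else
    let vals := [seq gval n' (S :|: nbhd u) (~~ dom) | u <- moves] in
    (if dom then foldr minn (head 0 vals) vals else foldr maxn 0 vals).+1
  end.

Definition gamma_tg : nat := gval #|T|.+1 set0 true.

Definition gamma_tg_v (v : T) : nat := gval #|T|.+1 [set v] true.

Definition no_isolated : Prop := forall x : T, exists y, e x y.

Definition crit3 : Prop :=
  no_isolated /\ gamma_tg = 3 /\ forall v : T, (gamma_tg_v v < 3)%N.

End TotalDominationGame.

Definition join_rel (T1 T2 : finType) (e1 : rel T1) (e2 : rel T2) : rel (T1 + T2) :=
  fun x y =>
    match x, y with
    | inl a, inl b => e1 a b
    | inr a, inr b => e2 a b
    | _, _ => true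
    end.

Definition graph_iso (T T' : finType) (e : rel T) (e' : rel T') : Prop :=
  exists f : T -> T', bijective f /\ forall x y, e' (f x) (f y) = e x y.

Definition K1_Kk_rel (k : nat) : rel 'I_k.+1 :=
  fun i j => [&& i != j, i != ord0 & j != ord0].
Arguments K1_Kk_rel k : clear implicits.

Definition is_K1_Kk (T : finType) (e : rel T) : Prop :=
  exists k, (2 <= k)%N /\ graph_iso e (K1_Kk_rel k).

(* Main.v *)
From mathcomp Require Import fingroup perm.
Require Import Defs.
From mathcomp Require Import all_boot.
From Stdlib Require Setoid.
Set Implicit Arguments. Unset Strict Implicit. Unset Printing Implicit Defensive.

Section Game.
Variables (T : finType) (e : rel T).

Lemma foldr_minn_le (h k : nat) (s : seq nat) :
  (foldr minn h s <= k) = (h <= k) || has (fun v => v <= k) s.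
Proof.
elim: s => [|x s IH] /=; first by rewrite orbF.
by rewrite geq_min IH orbCA.
Qed.

Lemma foldr_maxn_le (k : nat) (s : seq nat) :
  (foldr maxn 0 s <= k) = all (fun v => v <= k) s.
Proof. by elim: s => [|x s IH] //=; rewrite geq_max IH. Qed.

Lemma gval_le_n n S d : gval e n S d <= n.
Proof.
elim: n S d => [|n IH] S d //=.
case: [seq u <- enum T | legal e S u] => [|u us] //=.
rewrite ltnS; case: d => /=.
  by rewrite geq_min IH.
rewrite geq_max IH /= foldr_maxn_le; apply/allP => v /mapP [w _ ->]; exact: IH.
Qed.

Lemma gval0_iff n S d : gval e n.+1 S d = 0 <-> (forall u, ~~ legal e S u).
Proof.
rewrite /=; case E: [seq u <- enum T | legal e S u] => [|u us] /=.
  split=> // _ u; apply/negP => Lu.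
  have : u \in [seq u <- enum T | legal e S u] by rewrite mem_filter Lu mem_enum.
  by rewrite E.
split=> // H.
have : u \in [seq u <- enum T | legal e S u] by rewrite E mem_head.
by rewrite mem_filter (negbTE (H u)).
Qed.

Lemma gval_true_le n S k :
  gval e n.+1 S true <= k.+1 <->
  (forall u, ~~ legal e S u) \/ exists u, legal e S u /\ gval e n (S :|: nbhd e u) false <= k.
Proof.
rewrite /=; case E: [seq u <- enum T | legal e S u] => [|u us] /=.
  split=> // _; left => u; apply/negP => Lu.
  have : u \in [seq u <- enum T | legal e S u] by rewrite mem_filter Lu mem_enum.
  by rewrite E.
have Lu : legal e S u.
  have : u \in [seq u <- enum T | legal e S u] by rewrite E mem_head.
  by rewrite mem_filter => /andP [].
rewrite ltnS geq_min foldr_minn_le orbA orbb.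
have -> : (gval e n (S :|: nbhd e u) false <= k) || has (fun v => v <= k) [seq gval e n (S :|: nbhd e u0) false | u0 <- us]
   = has (fun v => v <= k) [seq gval e n (S :|: nbhd e u0) false | u0 <- u :: us] by [].
rewrite -E has_map; split.
  move=> /hasP [w]; rewrite mem_filter => /andP [Lw _] /= Hw; right; by exists w.
case=> [H|[w [Lw Hw]]]; first by rewrite (negbTE (H u)) in Lu.
apply/hasP; exists w => //; by rewrite mem_filter Lw mem_enum.
Qed.

Lemma gval_false_le n S k :
  gval e n.+1 S false <= k.+1 <->
  forall u, legal e S u -> gval e n (S :|: nbhd e u) true <= k.
Proof.
rewrite /=; case E: [seq u <- enum T | legal e S u] => [|u us] /=.
  split=> // _ w Lw.
  have : w \in [seq u <- enum T | legal e S u] by rewrite mem_filter Lw mem_enum.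
  by rewrite E.
rewrite ltnS.
have -> : maxn (gval e n (S :|: nbhd e u) true) (foldr maxn 0 [seq gval e n (S :|: nbhd e u0) true | u0 <- us])
   = foldr maxn 0 [seq gval e n (S :|: nbhd e u0) true | u0 <- u :: us] by [].
rewrite foldr_maxn_le -E all_map; split.
  move=> /allP H w Lw; apply: (H w); by rewrite mem_filter Lw mem_enum.
move=> H; apply/allP => w; rewrite mem_filter => /andP [Lw _]; exact: H.
Qed.


Definition Two (S : {set T}) := (forall u, ~~ legal e S u) \/ exists x, legal e S x /\
  forall y, legal e (S :|: nbhd e x) y -> forall z, ~~ legal e ((S :|: nbhd e x) :|: nbhd e y) z.

Lemma le2 n S : gval e n.+3 S true <= 2 <-> Two S.
Proof.
rewrite gval_true_le /Two; split; case=> [H|[x [Lx H]]]; [by left| |by left|]; right; exists x; split => //.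
  move=> y Ly; move/gval_false_le: H => /(_ y Ly).
  by rewrite leqn0 => /eqP /gval0_iff.
apply/gval_false_le => y Ly; rewrite leqn0; apply/eqP/gval0_iff; exact: H.
Qed.

Lemma legalE S u : legal e S u = [exists w, e u w && (w \notin S)].
Proof. by []. Qed.

Lemma le3 n S :
  (exists x, legal e S x /\ forall y, legal e (S :|: nbhd e x) y ->
     exists z, forall w, (w \in S) || e x w || e y w || e z w) ->
  gval e n.+4 S true <= 3.
Proof.
case=> x [Lx H]; apply/gval_true_le; right; exists x; split => //.
apply/gval_false_le => y Ly; apply/gval_true_le.
have [z Hz] := H y Ly.
case Lz: (legal e ((S :|: nbhd e x) :|: nbhd e y) z).
  right; exists z; split => //; rewrite leqn0; apply/eqP/gval0_iff => u.
  apply/existsP => [[w /andP [_]]]; rewrite !inE; by move: (Hz w) => ->.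
left => u; apply/existsP => [[w /andP [euw]]]; rewrite !inE => Hw.
move: (Hz w); rewrite (negbTE Hw) /= => ezw.
by move: Lz => /negbT /existsP; apply; exists w; rewrite ezw !inE.
Qed.

Lemma le3' n S : 2 < n ->
  (exists x, legal e S x /\ forall y, legal e (S :|: nbhd e x) y ->
     exists z, forall w, (w \in S) || e x w || e y w || e z w) ->
  gval e n S true <= 3.
Proof.
case: n => [|[|[|[|n]]]] // _ H; first exact: gval_le_n.
exact: le3.
Qed.

Hypothesis esym : symmetric e.
Hypothesis noiso : no_isolated e.

Lemma nolegal S : (forall u, ~~ legal e S u) <-> forall w, w \in S.
Proof.
split=> [H w|H u].
  apply/negPn/negP => Hw; have [y eyw] := noiso w.
  move: (H y) => /existsP; apply; exists w; by rewrite esym eyw.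
by apply/existsP => [[w /andP [_]]]; rewrite H.
Qed.

Definition TwoP (S : {set T}) := (forall w, w \in S) \/ exists x, (exists w, e x w && (w \notin S)) /\
  forall y, (exists w, [&& e y w, w \notin S & ~~ e x w]) -> forall w, (w \in S) || e x w || e y w.

Lemma Two_iff S : Two S <-> TwoP S.
Proof.
rewrite /Two /TwoP nolegal; split; case=> [H|[x [/existsP Lx H]]]; [by left| |by left|];
  right; exists x; split => //.
  move=> y [w Hw] w'.
  have Ly : legal e (S :|: nbhd e x) y.
    by apply/existsP; exists w; rewrite !inE negb_or.
  by move/nolegal: (H y Ly) => /(_ w'); rewrite !inE.
move=> y /existsP [w]; rewrite !inE negb_or => Hw.
apply/nolegal => w'; rewrite !inE; apply: (H y); by exists w.
Qed.


Lemma crit3_to : crit3 e -> ~ TwoP set0 /\ forall v, TwoP [set v].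
Proof.
case=> _ [G3 Gv].
have Hn : 2 < #|T|.+1 by rewrite -G3 /gamma_tg; apply: gval_le_n.
move: G3 Gv; rewrite /gamma_tg /gamma_tg_v.
case E: #|T|.+1 Hn => [|[|[|m]]] // _ G3 Gv; split.
  by move/Two_iff/(le2 m); rewrite G3.
by move=> v; apply/Two_iff/(le2 m); rewrite -ltnS Gv.
Qed.

Lemma crit3_from : 1 < #|T| -> gamma_tg e <= 3 -> ~ TwoP set0 -> (forall v, TwoP [set v]) -> crit3 e.
Proof.
move=> Hn; have Hm : 2 < #|T|.+1 by [].
rewrite /crit3 /gamma_tg /gamma_tg_v.
case E: #|T|.+1 Hm => [|[|[|m]]] // _ G3 N2 H2; split => //; split.
  apply/eqP; rewrite eqn_leq G3 /= ltnNge; apply/negP => /(le2 m) /Two_iff; exact: N2.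
by move=> v; rewrite ltnS; apply/(le2 m)/Two_iff.
Qed.

End Game.

Section Comp.
Variables (T : finType) (e : rel T).

Definition Pc (a : T) := forall c, (exists d, e c d && ~~ e a d) -> forall d, e a d || e c d.
Definition Qc (v a : T) := forall c, (exists d, [&& e c d, d != v & ~~ e a d]) ->
   forall d, [|| d == v, e a d | e c d].
Definition Cc := (forall a, ~ Pc a) /\ (forall v, exists a, Qc v a).

Hypothesis esym : symmetric e.
Hypothesis eirr : irreflexive e.
Hypothesis ne : 0 < #|T|.

Lemma Two0_iff : no_isolated e -> (TwoP e set0 <-> exists a, Pc a).
Proof.
move=> noi; rewrite /TwoP; split.
  case=> [H|[x [_ H]]].
    by case/card_gt0P: ne => w _; move: (H w); rewrite inE.
  exists x => c [d Hd] d'; move: (H c) => /(_ _ d'); rewrite inE /=; apply.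
  by exists d; rewrite inE.
case=> a Pa; right; exists a; split.
  by have [w Hw] := noi a; exists w; rewrite Hw inE.
move=> y [w]; rewrite inE /= => Hw d; rewrite inE /=; apply: Pa; by exists w.
Qed.

Lemma card_gt1 : no_isolated e -> 1 < #|T|.
Proof.
move=> noi; case/card_gt0P: ne => w _.
have [y ewy] := noi w.
have nwy : w != y by apply/eqP => E; move: ewy; rewrite E eirr.
by apply/card_gt1P; exists w, y.
Qed.

Lemma exists_other (v : T) : no_isolated e -> exists z, z != v.
Proof.
move=> noi; have [y evy] := noi v; exists y.
by apply/eqP => E; move: evy; rewrite E eirr.
Qed.

Lemma Twov_iff (v : T) : no_isolated e -> (TwoP e [set v] <-> exists a, Qc v a).
Proof.
move=> noi; rewrite /TwoP; split.
  case=> [H|[x [_ H]]].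
    by have [z Hz] := exists_other v noi; move: (H z); rewrite inE (negbTE Hz).
  exists x => c [d Hd] d'.
  have Hc: exists w, [&& e c w, w \notin [set v] & ~~ e x w] by exists d; rewrite inE.
  by move: (H c Hc d'); rewrite inE -orbA.
case=> a Qa; right.
case: (boolP [exists w, e a w && (w != v)]) => [/existsP [w Hw]|Na].
  exists a; split; first by exists w; rewrite inE.
  move=> y [w' ]; rewrite inE /= => Hw' d; rewrite inE -orbA; apply: Qa; by exists w'.
have Nav : forall w, e a w -> w = v.
  move=> w eaw; apply/eqP/negPn/negP => wv; move/existsP: Na; apply; exists w; by rewrite eaw.
have [z zv] := exists_other v noi.
have [y ezy] := noi z.
have Cy : forall d, (d == v) || e y d.
  move=> d; have Hy : exists d0, [&& e y d0, d0 != v & ~~ e a d0].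
    exists z; rewrite esym ezy zv /=; apply/negP => /Nav E; by rewrite E eqxx in zv.
  case/or3P: (Qa y Hy d) => [->|/Nav ->|->] //; by rewrite ?eqxx ?orbT.
exists y; split; first by exists z; rewrite inE zv esym ezy.
move=> y' [w]; rewrite inE => /and3P [_ wv ]; move: (Cy w); rewrite (negbTE wv) /= => ->.
by [].
Qed.


Lemma Q_notadj v a : Cc -> Qc v a -> ~~ e a v.
Proof.
case=> NP _ Qa; apply/negP => eav; apply: (NP a) => c [d /andP [ecd nad]] d'.
have Hc : exists d0, [&& e c d0, d0 != v & ~~ e a d0].
  exists d; rewrite ecd nad andbT; apply/eqP => E; by rewrite E eav in nad.
case/or3P: (Qa c Hc d') => [/eqP ->|->|->]; by rewrite ?eav ?orbT.
Qed.

Lemma gamma_le3 : no_isolated e -> Cc -> gamma_tg e <= 3.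
Proof.
move=> noi CC; apply: le3'; first by have := card_gt1 noi.
case/card_gt0P: ne => v0 _.
have [a Qa] := (proj2 CC) v0.
have nav := Q_notadj CC Qa.
have [w0 eaw0] := noi a.
exists a; split; first by apply/existsP; exists w0; rewrite eaw0 inE.
move=> y /existsP [w1]; rewrite !inE => /andP [eyw1 naw1].
have [z0 ev0z0] := noi v0.
case: (eqVneq w1 v0) => [Ew1|w1v0].
  case: (boolP [exists d, (d != v0) && ~~ e a d]) => [/existsP [d0 /andP [d0v0 nad0]]|Nd].
    have [z ed0z] := noi d0.
    have Hz : exists d, [&& e z d, d != v0 & ~~ e a d] by exists d0; rewrite esym ed0z d0v0.
    exists z => w; case: (eqVneq w v0) => [->|wv0]; first by rewrite -Ew1 eyw1 !orbT.
    case/or3P: (Qa z Hz w) => [|->|->]; by rewrite ?(negbTE wv0) ?orbT.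
  exists a => w; case: (eqVneq w v0) => [->|wv0]; first by rewrite -Ew1 eyw1 !orbT.
  case: (boolP (e a w)) => [eaw|naw]; first by apply/orP; right.
  by move/existsP: Nd => []; exists w; rewrite wv0.
have Hy : exists d, [&& e y d, d != v0 & ~~ e a d] by exists w1; rewrite eyw1 w1v0.
exists z0 => w; case: (eqVneq w v0) => [->|wv0]; first by rewrite (esym z0 v0) ev0z0 !orbT.
case/or3P: (Qa y Hy w) => [|->|->]; by rewrite ?(negbTE wv0) ?orbT.
Qed.

Definition Struct := exists a, [/\ forall y, ~~ e a y,
  forall x y, x != y -> x != a -> y != a -> e x y &
  exists c d, [/\ c != a, d != a & c != d]].

Lemma K_cover v x b : Qc v x -> (forall y, ~~ e b y) -> b != v ->
  forall c d, e c d -> (d == v) || e x d.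
Proof.
move=> Qx ib bv c d ecd; case: (boolP ((d == v) || e x d)) => // /norP [dv nxd].
have Hc : exists d0, [&& e c d0, d0 != v & ~~ e x d0] by exists d; rewrite ecd dv.
move: (Qx c Hc b); rewrite (negbTE bv) (esym x b) (esym c b) !(negbTE (ib _)).
by [].
Qed.

Lemma K_noniso v x b : Cc -> Qc v x -> (forall y, ~~ e b y) -> b != v -> exists y, e v y.
Proof.
move=> CC Qx ib bv; case: (boolP [exists y, e v y]) => [/existsP //|/existsPn iv].
exfalso; apply: (proj1 CC x) => c [d /andP [ecd nxd]].
case/orP: (K_cover Qx ib bv ecd) => [/eqP Ed|exd]; last by rewrite exd in nxd.
by move: ecd; rewrite Ed esym (negbTE (iv c)).
Qed.

Lemma C_struct : Cc -> ~ no_isolated e -> Struct.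
Proof.
move=> CC noi.
have [a ia] : exists a, forall y, ~~ e a y.
  case: (boolP [exists a, [forall y, ~~ e a y]]) => [/existsP [a /forallP H]|/existsPn H]; first by exists a.
  exfalso; apply: noi => x; move: (H x) => /forallPn [y]; rewrite negbK => exy; by exists y.
have uniq_iso : forall b, (forall y, ~~ e b y) -> b = a.
  move=> b ib; apply/eqP/negPn/negP => ba.
  have [x Qx] := (proj2 CC) a.
  have [y eay] := K_noniso CC Qx ib ba.
  by rewrite (negbTE (ia y)) in eay.
exists a; split => //.
  move=> u w uw ua wa.
  have [x Qx] := (proj2 CC) u.
  have au : a != u by rewrite eq_sym.
  have Kc := K_cover Qx ia au.
  have cov : forall t, t != a -> (t == u) || e x t.
    move=> t ta; case: (boolP [exists y, e t y]) => [/existsP [y ety]|/existsPn it].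
      by apply: (Kc y); rewrite esym.
    by rewrite (uniq_iso t it) eqxx in ta.
  have [y euy] := K_noniso CC Qx ia au.
  have ya : y != a by apply/eqP => E; rewrite E esym in euy; rewrite (negbTE (ia u)) in euy.
  have yu : y != u by apply/eqP => E; rewrite E eirr in euy.
  have xa : x != a.
    apply/eqP => E; move: (cov y ya); rewrite (negbTE yu) E /=; by rewrite (negbTE (ia y)).
  have xu : x == u.
    move: (cov x xa); by rewrite eirr orbF.
  move: (cov w wa); rewrite eq_sym (negbTE uw) /= => exw.
  by move/eqP: xu => <-.
case: (boolP [exists c, [exists d, e c d]]) => [/existsP [c /existsP [d ecd]]|/existsPn H].
  exists c, d; split.
  - by apply/eqP => E; rewrite E (negbTE (ia d)) in ecd.
  - by apply/eqP => E; rewrite E esym (negbTE (ia c)) in ecd.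
  - by apply/eqP => E; rewrite E eirr in ecd.
exfalso; apply: (proj1 CC a) => c [d /andP [ecd _]].
by move: (H c) => /existsPn /(_ d); rewrite ecd.
Qed.

Lemma struct_C : Struct -> Cc.
Proof.
case=> a [ia adj [c [d [ca da cd]]]].
have nea : forall y, e y a = false by move=> y; rewrite esym (negbTE (ia y)).
split.
  move=> x Px.
  case: (eqVneq x a) => [Ex|xa].
    rewrite Ex in Px.
    have H : exists d0, e c d0 && ~~ e a d0 by exists d; rewrite adj // (negbTE (ia d)).
    by move: (Px c H c); rewrite eirr (negbTE (ia c)).
  have [c' [c'x c'a]] : exists c', c' != x /\ c' != a.
    case: (eqVneq c x) => [Ecx|cx]; last by exists c.
    exists d; split => //; by rewrite -Ecx eq_sym.
  have H : exists d0, e c' d0 && ~~ e x d0 by exists x; rewrite adj // eirr.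
  by move: (Px c' H a); rewrite !nea.
move=> v; case: (eqVneq v a) => [->|va].
  exists c => c0 [d0 /and3P [ec0d0 d0a ncd0]] d1.
  have Ed0 : d0 = c.
    apply/eqP/negPn/negP => d0c; move: ncd0; by rewrite adj // eq_sym.
  case: (eqVneq d1 a) => [->|d1a] //.
  case: (eqVneq d1 c) => [->|d1c]; first by rewrite -Ed0 ec0d0 !orbT.
  by rewrite adj // eq_sym.
exists v => c0 [d0 /and3P [ec0d0 d0v nvd0]].
case: (eqVneq d0 a) => [Ed0|d0a]; first by rewrite Ed0 nea in ec0d0.
by rewrite adj // eq_sym in nvd0.
Qed.

Lemma K1Kk_struct : is_K1_Kk e -> Struct.
Proof.
case=> k [k2 [f [fb fe]]].
have finj := bij_inj fb.
case: fb => g fg gf.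
exists (g ord0); split.
- by move=> y; rewrite -fe gf /K1_Kk_rel eqxx andbF.
- move=> x y xy xa ya; rewrite -fe /K1_Kk_rel (inj_eq finj) xy /=.
  apply/andP; split; apply/negP => /eqP E.
  + by move: xa; rewrite -E fg eqxx.
  + by move: ya; rewrite -E fg eqxx.
have l1 : 1 < k.+1 by rewrite ltnS; apply: leq_trans k2.
have l2 : 2 < k.+1 by [].
exists (g (Ordinal l1)), (g (Ordinal l2)); split.
- by rewrite (can_eq gf).
- by rewrite (can_eq gf).
- by rewrite (can_eq gf).
Qed.

Lemma struct_K1Kk : Struct -> is_K1_Kk e.
Proof.
case=> a [ia adj [c [d [ca da cd]]]].
have ne' : 0 < #|T| := ne.
set k := #|T|.-1.
have Ek : #|T| = k.+1 by rewrite /k prednK.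
have k2 : 2 <= k.
  have : 2 < #|T|.
    apply/card_gt2P; exists a, c, d; split => //; split => //; by rewrite eq_sym.
  by rewrite Ek.
pose r0 : 'I_#|T| := Ordinal ne'.
pose f (x : T) : 'I_k.+1 := cast_ord Ek (tperm (enum_rank a) r0 (enum_rank x)).
have finj : injective f.
  move=> x y; rewrite /f => /cast_ord_inj /perm_inj; exact: enum_rank_inj.
have f0 : forall x, (f x == ord0) = (x == a).
  move=> x; have -> : (ord0 : 'I_k.+1) = f a.
    by apply: val_inj; rewrite /f /= tpermL.
  exact: inj_eq.
exists k; split => //; exists f; split.
  apply: inj_card_bij => //; by rewrite card_ord Ek.
move=> x y; rewrite /K1_Kk_rel (inj_eq finj) !f0.
case: (eqVneq x a) => [->|xa]; first by rewrite (negbTE (ia y)) andbF.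
case: (eqVneq y a) => [->|ya]; first by rewrite esym (negbTE (ia x)) !andbF.
case: (eqVneq x y) => [->|xy]; first by rewrite eirr.
by rewrite adj.
Qed.

Lemma comp_iff : crit3 e \/ is_K1_Kk e <-> Cc.
Proof.
split.
  case=> [cr|/K1Kk_struct]; last exact: struct_C.
  have noi : no_isolated e by case: cr.
  have [N2 T2] := crit3_to esym noi cr.
  split.
    by move=> a Pa; apply: N2; apply/(Two0_iff noi); exists a.
  by move=> v; apply/(Twov_iff v noi).
move=> CC.
case: (boolP [forall x, [exists y, e x y]]) => [/forallP H|/forallPn [x /existsPn Hx]].
  have noi : no_isolated e by move=> x; move/existsP: (H x).
  left; apply: (crit3_from esym noi (card_gt1 noi) (gamma_le3 noi CC)).
    by move/(Two0_iff noi) => [a Pa]; apply: (proj1 CC a).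
  by move=> v; apply/(Twov_iff v noi); apply: (proj2 CC).
right; apply: struct_K1Kk; apply: C_struct => // noi.
have [y exy] := noi x; by rewrite (negbTE (Hx y)) in exy.
Qed.

End Comp.

Section Join.
Variables (T1 T2 : finType) (e1 : rel T1) (e2 : rel T2).
Hypotheses (s1 : symmetric e1) (s2 : symmetric e2) (i1 : irreflexive e1) (i2 : irreflexive e2).
Hypotheses (n1 : 0 < #|T1|) (n2 : 0 < #|T2|).
Local Notation J := (join_rel e1 e2).

Lemma Jsym : symmetric J.
Proof. by case=> [a|a] [b|b] //=. Qed.

Lemma Jnoiso : no_isolated J.
Proof.
case/card_gt0P: n1 => a0 _; case/card_gt0P: n2 => b0 _.
by case=> [a|b]; [exists (inr b0) | exists (inl a0)].
Qed.

Lemma Jcard : 1 < #|{: T1 + T2}|.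
Proof.
case/card_gt0P: n1 => a0 _; case/card_gt0P: n2 => b0 _.
by apply/card_gt1P; exists (inl a0), (inr b0).
Qed.

Lemma Jle3 : gamma_tg J <= 3.
Proof.
case/card_gt0P: n1 => a0 _; case/card_gt0P: n2 => b0 _.
apply: le3'; first by have := Jcard.
exists (inl a0); split; first by apply/existsP; exists (inr b0); rewrite inE.
move=> y _; exists (inr b0) => [[w|w]] /=; by rewrite ?orbT.
Qed.

Lemma J0 : TwoP J set0 <-> (exists a, Pc e1 a) \/ (exists b, Pc e2 b).
Proof.
case/card_gt0P: n1 => a0 _; case/card_gt0P: n2 => b0 _.
split.
  case=> [H|[[a|b] [_ H]]]; first by move: (H (inl a0)); rewrite inE.
    left; exists a => c [d Hd] d'.
    have Hc : exists w, [&& J (inl c) w, w \notin set0 & ~~ J (inl a) w] by exists (inl d); rewrite inE.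
    by move: (H _ Hc (inl d')); rewrite inE.
  right; exists b => c [d Hd] d'.
  have Hc : exists w, [&& J (inr c) w, w \notin set0 & ~~ J (inr b) w] by exists (inr d); rewrite inE.
  by move: (H _ Hc (inr d')); rewrite inE.
case=> [[a Pa]|[b Pb]]; right.
  exists (inl a); split; first by exists (inr b0); rewrite inE.
  move=> [c|c] [[d|d] Hd] // [d'|d'] /=; rewrite ?inE ?orbT //=.
  - by apply: Pa; exists d; move: Hd; rewrite inE /= => /andP [-> ->].
  - by move: Hd; rewrite inE /= ?andbF.
exists (inr b); split; first by exists (inl a0); rewrite inE.
move=> [c|c] [[d|d] Hd] // [d'|d'] /=; rewrite ?inE ?orbT //=.
- by move: Hd; rewrite inE /= ?andbF.
- by apply: Pb; exists d; move: Hd; rewrite inE /= => /andP [-> ->].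
Qed.

Lemma JL v : TwoP J [set inl v] -> (exists a, Qc e1 v a) \/ (exists b, Pc e2 b).
Proof.
case/card_gt0P: n2 => b0 _.
case=> [H|[[a|b] [_ H]]]; first by move: (H (inr b0)); rewrite inE.
  left; exists a => c [d Hd] d'.
  have Hc : exists w, [&& J (inl c) w, w \notin [set inl v] & ~~ J (inl a) w] by exists (inl d); rewrite inE.
  by move: (H _ Hc (inl d')); rewrite inE /= -orbA.
right; exists b => c [d Hd] d'.
have Hc : exists w, [&& J (inr c) w, w \notin [set inl v] & ~~ J (inr b) w] by exists (inr d); rewrite inE.
by move: (H _ Hc (inr d')); rewrite inE.
Qed.

Lemma JL' v a : Qc e1 v a -> TwoP J [set inl v].
Proof.
case/card_gt0P: n2 => b0 _ => Qa.
right; exists (inl a); split; first by exists (inr b0); rewrite inE.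
move=> [c|c] [[d|d] Hd] // [d'|d'] /=; rewrite ?inE ?orbT //=.
- rewrite -orbA; apply: Qa; exists d; by move: Hd; rewrite inE.
- by move: Hd; rewrite inE /= ?andbF.
Qed.

Lemma JR v : TwoP J [set inr v] -> (exists a, Pc e1 a) \/ (exists b, Qc e2 v b).
Proof.
case/card_gt0P: n1 => a0 _.
case=> [H|[[a|b] [_ H]]]; first by move: (H (inl a0)); rewrite inE.
  left; exists a => c [d Hd] d'.
  have Hc : exists w, [&& J (inl c) w, w \notin [set inr v] & ~~ J (inl a) w] by exists (inl d); rewrite inE.
  by move: (H _ Hc (inl d')); rewrite inE.
right; exists b => c [d Hd] d'.
have Hc : exists w, [&& J (inr c) w, w \notin [set inr v] & ~~ J (inr b) w] by exists (inr d); rewrite inE.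
by move: (H _ Hc (inr d')); rewrite inE /= -orbA.
Qed.

Lemma JR' v b : Qc e2 v b -> TwoP J [set inr v].
Proof.
case/card_gt0P: n1 => a0 _ => Qb.
right; exists (inr b); split; first by exists (inl a0); rewrite inE.
move=> [c|c] [[d|d] Hd] // [d'|d'] /=; rewrite ?inE ?orbT //=.
- by move: Hd; rewrite inE /= ?andbF.
- rewrite -orbA; apply: Qb; exists d; by move: Hd; rewrite inE.
Qed.

Lemma Jcrit : crit3 J <-> Cc e1 /\ Cc e2.
Proof.
have JS := Jsym; have JN := Jnoiso.
split.
  move=> cr; have [N0 Tv] := crit3_to JS JN cr.
  have NP1 : forall a, ~ Pc e1 a by move=> a Pa; apply: N0; apply/J0; left; exists a.
  have NP2 : forall b, ~ Pc e2 b by move=> b Pb; apply: N0; apply/J0; right; exists b.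
  split; split => // v.
    by case: (JL (Tv (inl v))) => // [[b /NP2]].
  by case: (JR (Tv (inr v))) => // [[a /NP1]].
case=> [[NP1 Q1] [NP2 Q2]].
apply: (crit3_from JS JN Jcard Jle3).
  by case/J0 => [[a /NP1]|[b /NP2]].
case=> [v|v].
  by have [a Qa] := Q1 v; apply: JL' Qa.
by have [b Qb] := Q2 v; apply: JR' Qb.
Qed.

End Join.

Theorem theorem4p7 (T1 T2 : finType) (e1 : rel T1) (e2 : rel T2) :
  symmetric e1 -> irreflexive e1 -> symmetric e2 -> irreflexive e2 ->
  (0 < #|T1|)%N -> (0 < #|T2|)%N ->
  (crit3 (join_rel e1 e2) <->
   (crit3 e1 \/ is_K1_Kk e1) /\ (crit3 e2 \/ is_K1_Kk e2)).
Proof.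
move=> s1 i1 s2 i2 n1 n2.
rewrite (Jcrit s1 s2 n1 n2) (comp_iff s1 i1 n1) (comp_iff s2 i2 n2).
by [].
Qed.
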